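(* Let $(H,\mu_H,\Delta_H,\alpha_H)$ be a Hom-bialgebra and $(A,\mu_A,\alpha_A)$ a left $H$-module Hom-algebra with action $h\otimes a\mapsto h\cdot a$, and assume $\alpha_H$ and $\alpha_A$ are bijective. Define $R:H\otimes A\to A\otimes H$ by $R(h\otimes a)=\alpha_H^{-2}(h_1)\cdot\alpha_A^{-1}(a)\otimes\alpha_H^{-1}(h_2)$. Then $R$ is a Hom-twisting map between $A$ and $H$. Consequently $A\# H:=A\otimes_R H$ is a Hom-associative algebra with structure map $\alpha_A\otimes\alpha_H$ and multiplication $(a\# h)(a'\# h')=a(\alpha_H^{-2}(h_1)\cdot\alpha_A^{-1}(a'))\#\alpha_H^{-1}(h_2)h'$.
   Context: Algebras/coalgebras over a field $k$, not assumed (co)unital; $\Delta(h)=h_1\otimes h_2$ (Sweedler notation). A Hom-associative algebra is $(A,\mu,\alpha)$ with $\alpha(aa')=\alpha(a)\alpha(a')$, $\alpha(a)(a'a'')=(aa')\alpha(a'')$. A Hom-bialgebra is $(H,\mu,\Delta,\alpha)$ with $(H,\mu,\alpha)$ Hom-associative and $\Delta:H\to H\otimes H$ linear such that $\Delta(h_1)\otimes\alpha(h_2)=\alpha(h_1)\otimes\Delta(h_2)$, $\Delta(hh')=h_1h'_1\otimes h_2h'_2$, $\Delta(\alpha(h))=\alpha(h_1)\otimes\alpha(h_2)$. A left $H$-module Hom-algebra is a Hom-associative algebra $(A,\mu_A,\alpha_A)$ with a linear map $H\otimes A\to A$, $h\otimes a\mapsto h\cdot a$, such that $\alpha_A(h\cdot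 a)=\alpha_H(h)\cdot\alpha_A(a)$, $\alpha_H(h)\cdot(h'\cdot a)=(hh')\cdot\alpha_A(a)$, and $\alpha_H^2(h)\cdot(aa')=(h_1\cdot a)(h_2\cdot a')$. For Hom-associative algebras $(A,\mu_A,\alpha_A),(B,\mu_B,\alpha_B)$, a Hom-twisting map is a linear $R:B\otimes A\to A\otimes B$ with $(\alpha_A\otimes\alpha_B)\circ R=R\circ(\alpha_B\otimes\alpha_A)$, $R\circ(\alpha_B\otimes\mu_A)=(\mu_A\otimes\alpha_B)\circ(\mathrm{id}_A\otimes R)\circ(R\otimes\mathrm{id}_A)$, $R\circ(\mu_B\otimes\alpha_A)=(\alpha_A\otimes\mu_B)\circ(R\otimes\mathrm{id}_B)\circ(\mathrm{id}_B\otimes R)$; $A\otimes_RB$ is $A\otimes B$ with product $(\mu_A\otimes\mu_B)\circ(\mathrm{id}_A\otimes R\otimes\mathrm{id}_B)$ and structure map $\alpha_A\otimes\alpha_B$ (a Hom-associative algebra). $a\# h$ denotes $a\otimes h$. *)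

(* Defs.v *)
(* Since no (infinite-dimensional) tensor product is available, elements of
   V (x) W are represented by formal finite sums of simple tensors
   (seq (V * W)), and equality in V (x) W is equality under every bilinear
   map (universal property of the tensor product); likewise for triple
   tensors with trilinear maps. *)
From HB Require Import structures.
From mathcomp Require Import all_boot all_algebra.
Set Implicit Arguments. Unset Strict Implicit. Unset Printing Implicit Defensive.
Import GRing.Theory.
Local Open Scope ring_scope.

Section Defs.
Variable k : fieldType.

Definition lin (V W : lmodType k) (f : V -> W) :=
  forall (c : k) x y, f (c *: x + y) = c *: f x + f y.

Definition bilin (V W U : lmodType k) (f : V -> W -> U) :=
  (forall (c : k) x x' y, f (c *: x + x') y = c *: f x y + f x' y) /\
  (forall (c : k) x y y', f x (c *: y + y') = c *: f x y + f x y').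

Definition trilin (V W X U : lmodType k) (f : V -> W -> X -> U) :=
  (forall (c : k) x x' y z, f (c *: x + x') y z = c *: f x y z + f x' y z) /\
  (forall (c : k) x y y' z, f x (c *: y + y') z = c *: f x y z + f x y' z) /\
  (forall (c : k) x y z z', f x y (c *: z + z') = c *: f x y z + f x y z').

Definition teq2 (V W : lmodType k) (s t : seq (V * W)) :=
  forall (U : lmodType k) (f : V -> W -> U), bilin f ->
    \sum_(p <- s) f p.1 p.2 = \sum_(p <- t) f p.1 p.2.

Definition teq3 (V W X : lmodType k) (s t : seq (V * W * X)) :=
  forall (U : lmodType k) (f : V -> W -> X -> U), trilin f ->
    \sum_(p <- s) f p.1.1 p.1.2 p.2 = \sum_(p <- t) f p.1.1 p.1.2 p.2.

Definition tscale (V W : lmodType k) (c : k) (s : seq (V * W)) : seq (V * W) :=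
  [seq (c *: p.1, p.2) | p <- s].

Definition tmap (V W V' W' : lmodType k) (f : V -> V') (g : W -> W')
  (s : seq (V * W)) : seq (V' * W') := [seq (f p.1, g p.2) | p <- s].

Definition is_hom_assoc (A : lmodType k) (mu : A -> A -> A) (al : A -> A) :=
  [/\ bilin mu, lin al,
      (forall x y, al (mu x y) = mu (al x) (al y)) &
      (forall x y z, mu (al x) (mu y z) = mu (mu x y) (al z))].

(* Hom-bialgebra (H, mu, Delta, alpha); Delta h = sum of h_1 (x) h_2 *)
Definition is_hom_bialgebra (H : lmodType k) (mu : H -> H -> H) (al : H -> H)
  (D : H -> seq (H * H)) :=
  [/\ is_hom_assoc mu al,
      (forall (c : k) x y, teq2 (D (c *: x + y)) (tscale c (D x) ++ D y)),
      (* Delta(h_1) (x) alpha(h_2) = alpha(h_1) (x) Delta(h_2) *)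
      (forall h, teq3 (flatten [seq [seq (q.1, q.2, al p.2) | q <- D p.1] | p <- D h])
                      (flatten [seq [seq (al p.1, q.1, q.2) | q <- D p.2] | p <- D h])),
      (* Delta(h h') = h_1 h'_1 (x) h_2 h'_2 *)
      (forall h h', teq2 (D (mu h h'))
          (flatten [seq [seq (mu p.1 q.1, mu p.2 q.2) | q <- D h'] | p <- D h])) &
      (forall h, teq2 (D (al h)) (tmap al al (D h)))].

Definition is_module_hom_algebra (H A : lmodType k) (muH : H -> H -> H) (alH : H -> H)
  (D : H -> seq (H * H)) (muA : A -> A -> A) (alA : A -> A) (act : H -> A -> A) :=
  [/\ is_hom_assoc muA alA, bilin act,
      (forall h a, alA (act h a) = act (alH h) (alA a)),
      (forall h h' a, act (alH h) (act h' a) = act (muH h h') (alA a)) &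
      (forall h a a', act (alH (alH h)) (muA a a') =
                      \sum_(p <- D h) muA (act p.1 a) (act p.2 a'))].

Definition is_hom_twisting (A B : lmodType k) (muA : A -> A -> A) (alA : A -> A)
  (muB : B -> B -> B) (alB : B -> B) (R : B -> A -> seq (A * B)) :=
  [/\ (* R is (well defined and) linear on B (x) A *)
      (forall (c : k) b b' a, teq2 (R (c *: b + b') a) (tscale c (R b a) ++ R b' a)),
      (forall (c : k) b a a', teq2 (R b (c *: a + a')) (tscale c (R b a) ++ R b a')),
      (forall b a, teq2 (tmap alA alB (R b a)) (R (alB b) (alA a))),
      (* R o (alB (x) muA) = (muA (x) alB) o (id (x) R) o (R (x) id) *)
      (forall b a a', teq2 (R (alB b) (muA a a'))
          (flatten [seq [seq (muA p.1 q.1, alB q.2) | q <- R p.2 a'] | p <- R b a])) &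
      (* R o (muB (x) alA) = (alA (x) muB) o (R (x) id) o (id (x) R) *)
      (forall b b' a, teq2 (R (muB b b') (alA a))
          (flatten [seq [seq (alA q.1, muB q.2 p.2) | q <- R b p.1] | p <- R b' a]))].

(* the product of A (x)_R B : (mu_A (x) mu_B) o (id (x) R (x) id), on formal sums *)
Definition tw_mul (A B : lmodType k) (R : B -> A -> seq (A * B))
  (muA : A -> A -> A) (muB : B -> B -> B) (s t : seq (A * B)) : seq (A * B) :=
  flatten [seq flatten [seq [seq (muA p.1 r.1, muB r.2 q.2) | r <- R p.2 q.1]
                       | q <- t] | p <- s].

Definition is_hom_assoc_tensor (V W : lmodType k)
  (mu : seq (V * W) -> seq (V * W) -> seq (V * W)) (al : seq (V * W) -> seq (V * W)) :=
  [/\ (forall s s' t t', teq2 s s' -> teq2 t t' -> teq2 (mu s t) (mu s' t')),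
      (forall s s', teq2 s s' -> teq2 (al s) (al s')),
      (forall s t, teq2 (al (mu s t)) (mu (al s) (al t))) &
      (forall s t u, teq2 (mu (al s) (mu t u)) (mu (mu s t) (al u)))].

Definition smash_R (H A : lmodType k) (D : H -> seq (H * H)) (act : H -> A -> A)
  (invH : H -> H) (invA : A -> A) (h : H) (a : A) : seq (A * H) :=
  [seq (act (invH (invH p.1)) (invA a), invH p.2) | p <- D h].

End Defs.

(* Main.v *)
Require Import Defs.
From mathcomp Require Import all_boot all_algebra.
Set Implicit Arguments. Unset Strict Implicit. Unset Printing Implicit Defensive.
Import GRing.Theory.

Section Gen.
Variable k : fieldType.
Local Open Scope ring_scope.

Lemma lin0 (V W : lmodType k) (g : V -> W) : lin g -> g 0 = 0.
Proof. move=> h; have e := h 1 0 0; rewrite !scale1r addr0 in e.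
by apply: (@addrI _ (g 0)); rewrite addr0 -e. Qed.

Lemma linD (V W : lmodType k) (g : V -> W) x y : lin g -> g (x + y) = g x + g y.
Proof. by move=> h; have := h 1 x y; rewrite !scale1r. Qed.

Lemma linZ (V W : lmodType k) (g : V -> W) c x : lin g -> g (c *: x) = c *: g x.
Proof. by move=> h; have := h c x 0; rewrite addr0 (lin0 h) addr0. Qed.

Lemma linS (V W : lmodType k) (g : V -> W) I (r : seq I) (F : I -> V) : lin g ->
  g (\sum_(i <- r) F i) = \sum_(i <- r) g (F i).
Proof. move=> h; elim: r => [|a r IH]; rewrite ?big_nil ?big_cons ?(lin0 h) //.
by rewrite (linD _ _ h) IH. Qed.

Lemma bilinl (V W U : lmodType k) (f : V -> W -> U) y : bilin f -> lin (f^~ y).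
Proof. by move=> [h _] c x x'; apply: h. Qed.
Lemma bilinr (V W U : lmodType k) (f : V -> W -> U) x : bilin f -> lin (f x).
Proof. by move=> [_ h] c y y'; apply: h. Qed.

Definition Tlin (V X Y : lmodType k) (T : V -> seq (X * Y)) :=
  forall (c : k) x y, teq2 (T (c *: x + y)) (tscale c (T x) ++ T y).

Lemma Tlin_lin (V X Y U : lmodType k) (T : V -> seq (X * Y)) (F : X -> Y -> U) :
  Tlin T -> bilin F -> lin (fun x => \sum_(p <- T x) F p.1 p.2).
Proof. move=> hT hF c x y /=. rewrite (hT c x y _ F hF) big_cat big_map /= scaler_sumr.
congr (_ + _); apply eq_bigr => p _; exact: (linZ _ _ (bilinl _ hF)). Qed.

Lemma bilin_sumT1 (V X Y Z U : lmodType k) (T : V -> seq (X * Y)) (F : Z -> X -> Y -> U) :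
  Tlin T -> (forall z, bilin (F z)) -> (forall u v, lin (fun z => F z u v)) ->
  bilin (fun x z => \sum_(q <- T x) F z q.1 q.2).
Proof. move=> hT hF hl; split=> c x x' y.
  exact: (Tlin_lin hT (hF y)).
rewrite scaler_sumr -big_split /=; apply eq_bigr => q _; exact: (hl q.1 q.2). Qed.

Lemma bilin_sumT2 (V X Y Z U : lmodType k) (T : V -> seq (X * Y)) (F : Z -> X -> Y -> U) :
  Tlin T -> (forall z, bilin (F z)) -> (forall u v, lin (fun z => F z u v)) ->
  bilin (fun z x => \sum_(q <- T x) F z q.1 q.2).
Proof. move=> hT hF hl; split=> c x x' y.
  rewrite scaler_sumr -big_split /=; apply eq_bigr => q _; exact: (hl q.1 q.2).
exact: (Tlin_lin hT (hF x)). Qed.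

Lemma bilin_comp (V W V' W' U : lmodType k) (f : V' -> W' -> U) (g : V -> V') (h : W -> W') :
  bilin f -> lin g -> lin h -> bilin (fun x y => f (g x) (h y)).
Proof. move=> [f1 f2] hg hh; split=> c x x' y; by rewrite ?hg ?hh ?f1 ?f2. Qed.

Lemma lin_inv (V : lmodType k) (g gi : V -> V) : lin g -> cancel g gi -> cancel gi g -> lin gi.
Proof. move=> hg c1 c2 c x y; apply: (can_inj c1); by rewrite hg !c2. Qed.

End Gen.

Unset Implicit Arguments.
Section Main.
Variable k : fieldType.
Local Open Scope ring_scope.
Lemma sum_flatten (T1 T2 X : Type) (U : nmodType) (s : seq T1) (g : T1 -> seq T2)
  (h : T1 -> T2 -> X) (F : X -> U) :
  \sum_(x <- flatten [seq [seq h p q | q <- g p] | p <- s]) F x =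
  \sum_(p <- s) \sum_(q <- g p) F (h p q).
Proof. rewrite big_flatten big_map; apply eq_bigr => p _; by rewrite big_map. Qed.

Variables (H A : lmodType k)
  (muH : H -> H -> H) (alH : H -> H) (D : H -> seq (H * H))
  (muA : A -> A -> A) (alA : A -> A) (act : H -> A -> A)
  (iH : H -> H) (iA : A -> A).
Hypotheses (muHL : forall (c : k) x x' y, muH (c *: x + x') y = c *: muH x y + muH x' y)
  (muHR : forall (c : k) x y y', muH x (c *: y + y') = c *: muH x y + muH x y')
  (alHl : lin alH) (alHm : forall x y, alH (muH x y) = muH (alH x) (alH y))
  (muHa : forall x y z, muH (alH x) (muH y z) = muH (muH x y) (alH z))
  (Dlin : Tlin D)
  (Dco : forall h, teq3 (flatten [seq [seq (q.1, q.2, alH p.2) | q <- D p.1] | p <- D h])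
                      (flatten [seq [seq (alH p.1, q.1, q.2) | q <- D p.2] | p <- D h]))
  (Dmu : forall h h', teq2 (D (muH h h'))
          (flatten [seq [seq (muH p.1 q.1, muH p.2 q.2) | q <- D h'] | p <- D h]))
  (Dal : forall h, teq2 (D (alH h)) (tmap alH alH (D h)))
  (muAL : forall (c : k) x x' y, muA (c *: x + x') y = c *: muA x y + muA x' y)
  (muAR : forall (c : k) x y y', muA x (c *: y + y') = c *: muA x y + muA x y')
  (alAl : lin alA) (alAm : forall x y, alA (muA x y) = muA (alA x) (alA y))
  (muAa : forall x y z, muA (alA x) (muA y z) = muA (muA x y) (alA z))
  (actL : forall (c : k) x x' y, act (c *: x + x') y = c *: act x y + act x' y)
  (actR : forall (c : k) x y y', act x (c *: y + y') = c *: act x y + act x y')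
  (actal : forall h a, alA (act h a) = act (alH h) (alA a))
  (actmu : forall h h' a, act (alH h) (act h' a) = act (muH h h') (alA a))
  (actmod : forall h a a', act (alH (alH h)) (muA a a') =
                      \sum_(p <- D h) muA (act p.1 a) (act p.2 a'))
  (cH1 : cancel alH iH) (cH2 : cancel iH alH) (cA1 : cancel alA iA) (cA2 : cancel iA alA).

Lemma iHl : lin iH. Proof. exact: lin_inv alHl cH1 cH2. Qed.
Lemma iAl : lin iA. Proof. exact: lin_inv alAl cA1 cA2. Qed.
Lemma iHm x y : iH (muH x y) = muH (iH x) (iH y).
Proof. by apply: (can_inj cH1); rewrite alHm !cH2. Qed.
Lemma iAm x y : iA (muA x y) = muA (iA x) (iA y).
Proof. by apply: (can_inj cA1); rewrite alAm !cA2. Qed.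

Ltac lint := do 8 rewrite ?iHl ?iAl ?alHl ?alAl ?actL ?actR ?muAL ?muAR ?muHL ?muHR.

Ltac bil f1 f2 := split=> ? ? ? ? /=; do 8 rewrite ?iHl ?iAl ?alHl ?alAl ?actL ?actR ?muAL ?muAR ?muHL ?muHR ?f1 ?f2.
Ltac tril f1 f2 := split; [|split] => ? ? ? ? ? /=; do 8 rewrite ?iHl ?iAl ?alHl ?alAl ?actL ?actR ?muAL ?muAR ?muHL ?muHR ?f1 ?f2.

Lemma Dinv x (U : lmodType k) (F : H -> H -> U) : bilin F ->
  \sum_(p <- D (iH x)) F p.1 p.2 = \sum_(p <- D x) F (iH p.1) (iH p.2).
Proof.
move=> hF; rewrite -{2}(cH2 x) (Dal _ _ (fun u v => F (iH u) (iH v))).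
  by rewrite big_map; apply eq_bigr => p _ /=; rewrite !cH1.
exact: bilin_comp hF iHl iHl.
Qed.


Lemma Zl (V W U : lmodType k) (f : V -> W -> U)
  (f1 : forall (c : k) x x' y, f (c *: x + x') y = c *: f x y + f x' y) c x y :
  f (c *: x) y = c *: f x y.
Proof. have l : lin (f^~ y) := fun c x x' => f1 c x x' y. exact: linZ l. Qed.
Lemma Sl (V W U : lmodType k) (f : V -> W -> U)
  (f1 : forall (c : k) x x' y, f (c *: x + x') y = c *: f x y + f x' y) I (r : seq I) F y :
  f (\sum_(i <- r) F i) y = \sum_(i <- r) f (F i) y.
Proof. have l : lin (f^~ y) := fun c x x' => f1 c x x' y. exact: linS l. Qed.

Lemma Dinv3 x (U : lmodType k) (F : H -> H -> U) : bilin F ->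
  \sum_(p <- D (iH (iH (iH x)))) F p.1 p.2 =
  \sum_(p <- D x) F (iH (iH (iH p.1))) (iH (iH (iH p.2))).
Proof.
move=> hF; have h1 := bilin_comp hF iHl iHl.
have h2 := bilin_comp h1 iHl iHl.
rewrite (Dinv _ _ F) // (Dinv _ _ (fun u v => F (iH u) (iH v))) //.
by rewrite (Dinv _ _ (fun u v => F (iH (iH u)) (iH (iH v)))).
Qed.

Notation R := (smash_R D act iH iA).

Lemma tw1 : forall (c : k) b b' a, teq2 (R (c *: b + b') a) (tscale c (R b a) ++ R b' a).
Proof.
move=> c b b' a U f [f1 f2].
rewrite big_cat !big_map /=.
rewrite (Dlin c b b' U (fun x y => f (act (iH (iH x)) (iA a)) (iH y))); last first.
  by split=> ? ? ? ? /=; lint; rewrite ?f1 ?f2.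
rewrite !big_cat !big_map /=; congr (_ + _); apply eq_bigr => p _ /=.
by rewrite !(linZ _ _ iHl) (Zl _ _ _ _ actL) !(Zl _ _ _ _ f1).
Qed.

Lemma tw2 : forall (c : k) b a a', teq2 (R b (c *: a + a')) (tscale c (R b a) ++ R b a').
Proof.
move=> c b a a' U f [f1 f2].
rewrite big_cat !big_map /= -big_split; apply eq_bigr => p _ /=.
by rewrite iAl actR f1 (Zl _ _ _ _ f1).
Qed.

Lemma tw3 : forall b a, teq2 (tmap alA alH (R b a)) (R (alH b) (alA a)).
Proof.
move=> b a U f [f1 f2].
rewrite !big_map (Dal b U (fun x y => f (act (iH (iH x)) (iA (alA a))) (iH y))); last first.
  by split=> ? ? ? ? /=; lint; rewrite ?f1 ?f2.
rewrite big_map; apply eq_bigr => p _ /=.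
by rewrite actal !cH2 !cH1 cA1 cA2.
Qed.


Lemma tw4 : forall b a a', teq2 (R (alH b) (muA a a'))
          (flatten [seq [seq (muA p.1 q.1, alH q.2) | q <- R p.2 a'] | p <- R b a]).
Proof.
move=> b a a' U f [f1 f2].
pose F x y z := f (muA (act (iH (iH (iH x))) (iA a)) (act (iH (iH (iH y))) (iA a'))) z.
rewrite big_map (Dal b U (fun x y => f (act (iH (iH x)) (iA (muA a a'))) (iH y))); last by bil f1 f2.
rewrite big_map /=.
transitivity (\sum_(p <- D b) \sum_(q <- D p.1) F q.1 q.2 p.2).
  apply eq_bigr => p _ /=; rewrite !cH1 iAm.
  have e : iH p.1 = alH (alH (iH (iH (iH p.1)))) by rewrite !cH2.
  rewrite e actmod (Sl _ _ _ _ f1).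
  rewrite (Dinv3 _ _ (fun u v => f (muA (act u (iA a)) (act v (iA a'))) p.2)) //.
  by bil f1 f2.
pose G x y z := F x y (iH z).
have hG : trilin G by rewrite /G /F; tril f1 f2.
transitivity (\sum_(p <- D b) \sum_(q <- D p.2) G (alH p.1) q.1 q.2).
  have := Dco b U G hG; rewrite !sum_flatten /= => <-.
  by apply eq_bigr => p _; apply eq_bigr => q _; rewrite /G cH1.
rewrite sum_flatten big_map; apply eq_bigr => p _ /=; rewrite big_map /=.
rewrite (Dinv _ _ (fun u v => f (muA (act (iH (iH p.1)) (iA a)) (act (iH (iH u)) (iA a'))) (alH (iH v)))); last by bil f1 f2.
by apply eq_bigr => q _; rewrite /G /F /= !cH1 !cH2.
Qed.

Lemma tw5 : forall b b' a, teq2 (R (muH b b') (alA a))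
          (flatten [seq [seq (alA q.1, muH q.2 p.2) | q <- R b p.1] | p <- R b' a]).
Proof.
move=> b b' a U f [f1 f2].
rewrite big_map (Dmu b b' U (fun x y => f (act (iH (iH x)) (iA (alA a))) (iH y))); last by bil f1 f2.
rewrite !sum_flatten big_map exchange_big; apply eq_bigr => p _ /=; rewrite big_map.
apply eq_bigr => q _ /=.
by rewrite actal cA2 actmu cA2 !iHm cA1.
Qed.


Lemma sum_tw (U : lmodType k) (F : A * H -> U) s t :
  \sum_(x <- tw_mul R muA muH s t) F x =
  \sum_(p <- s) \sum_(q <- t) \sum_(r <- R p.2 q.1) F (muA p.1 r.1, muH r.2 q.2).
Proof. rewrite /tw_mul big_flatten big_map; apply eq_bigr => p _; by rewrite sum_flatten. Qed.

Lemma tcong : forall s s' t t', teq2 s s' -> teq2 t t' ->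
  teq2 (tw_mul R muA muH s t) (tw_mul R muA muH s' t').
Proof.
move=> s s' t t' hs ht U f [f1 f2]; rewrite !sum_tw /=.
transitivity (\sum_(p <- s') \sum_(q <- t)
   \sum_(r <- R p.2 q.1) f (muA p.1 r.1) (muH r.2 q.2)).
  rewrite exchange_big [RHS]exchange_big; apply eq_bigr => q _.
  apply: (hs U (fun x y => \sum_(r <- R y q.1) f (muA x r.1) (muH r.2 q.2))).
  apply: (bilin_sumT2 (T := fun y => R y q.1) (F := fun x u v => f (muA x u) (muH v q.2))).
  - by move=> c x y; exact: tw1.
  - by move=> z; bil f1 f2.
  - by move=> u v c x y /=; rewrite muAL f1.
apply eq_bigr => p _.
apply: (ht U (fun x y => \sum_(r <- R p.2 x) f (muA p.1 r.1) (muH r.2 y))).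
apply: (bilin_sumT1 (T := fun x => R p.2 x) (F := fun z u v => f (muA p.1 u) (muH v z))).
- by move=> c x y; exact: tw2.
- by move=> z; bil f1 f2.
- by move=> u v c x y /=; rewrite muHR f2.
Qed.

Lemma tal : forall s s', teq2 s s' -> teq2 (tmap alA alH s) (tmap alA alH s').
Proof.
move=> s s' hs U f hf; rewrite !big_map.
exact: (hs U (fun x y => f (alA x) (alH y)) (bilin_comp hf alAl alHl)).
Qed.

Lemma tmul : forall s t, teq2 (tmap alA alH (tw_mul R muA muH s t))
   (tw_mul R muA muH (tmap alA alH s) (tmap alA alH t)).
Proof.
move=> s t U f [f1 f2]; rewrite big_map !sum_tw big_map; apply eq_bigr => p _.
rewrite big_map; apply eq_bigr => q _ /=.
rewrite -(tw3 p.2 q.1 U (fun u v => f (muA (alA p.1) u) (muH v (alH q.2)))); last by bil f1 f2.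
by rewrite [RHS]big_map; apply eq_bigr => r _ /=; rewrite alAm alHm.
Qed.

Lemma tassoc : forall s t u, teq2 (tw_mul R muA muH (tmap alA alH s) (tw_mul R muA muH t u))
   (tw_mul R muA muH (tw_mul R muA muH s t) (tmap alA alH u)).
Proof.
move=> s t u U f [f1 f2]; rewrite !sum_tw big_map; apply eq_bigr => p _ /=.
rewrite sum_tw; apply eq_bigr => q _ /=; rewrite [RHS]exchange_big [RHS]big_map.
apply eq_bigr => w _ /=.
transitivity (\sum_(z <- R q.2 w.1) \sum_(x <- R p.2 q.1) \sum_(y <- R x.2 z.1)
   f (muA (muA p.1 x.1) (alA y.1)) (muH (muH y.2 z.2) (alH w.2))).
  apply eq_bigr => z _.
  rewrite (tw4 p.2 q.1 z.1 U (fun u v => f (muA (alA p.1) u) (muH v (muH z.2 w.2)))); last by bil f1 f2.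
  rewrite sum_flatten; apply eq_bigr => x _; apply eq_bigr => y _ /=.
  by rewrite muAa muHa.
rewrite exchange_big; apply eq_bigr => x _.
rewrite (tw5 x.2 q.2 w.1 U (fun u v => f (muA (muA p.1 x.1) u) (muH v (alH w.2)))); last by bil f1 f2.
by rewrite sum_flatten.
Qed.

End Main.

Theorem theorem3p1 (k : fieldType) (H A : lmodType k)
  (muH : H -> H -> H) (alH : H -> H) (D : H -> seq (H * H))
  (muA : A -> A -> A) (alA : A -> A) (act : H -> A -> A)
  (invH : H -> H) (invA : A -> A) :
  is_hom_bialgebra muH alH D ->
  is_module_hom_algebra muH alH D muA alA act ->
  cancel alH invH -> cancel invH alH ->
  cancel alA invA -> cancel invA alA ->
  is_hom_twisting muA alA muH alH (smash_R D act invH invA) /\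
  is_hom_assoc_tensor (tw_mul (smash_R D act invH invA) muA muH) (tmap alA alH).
Proof.
move=> [[[muHL muHR] alHl alHm muHa] Dlin Dco Dmu Dal]
  [[[muAL muAR] alAl alAm muAa] [actL actR] actal actmu actmod] cH1 cH2 cA1 cA2.
split; split.
- by eapply tw1; eassumption.
- by eapply tw2; eassumption.
- by eapply tw3; eassumption.
- by eapply tw4; eassumption.
- by eapply tw5; eassumption.
- by eapply tcong; eassumption.
- by eapply tal; eassumption.
- by eapply tmul; eassumption.
- by eapply tassoc; eassumption.
Qed.
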